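(* Let $n,m,k$ be positive integers, let $X\in\mathbb{C}^{n\times n}$ be Hermitian, let $\Lambda:\mathbb{C}^{n\times n}\to\mathbb{C}^{m\times m}$ be a linear map and $Y\in\mathbb{C}^{m\times m}$. Consider the rank-constrained problem \[ (\mathrm{P})\qquad \max_{\rho\in\mathbb{C}^{n\times n}}\ \operatorname{Tr}(X\rho)\quad\text{s.t.}\quad \Lambda(\rho)=Y,\ \operatorname{Tr}(\rho)=1,\ \rho\ge 0,\ \operatorname{rank}(\rho)\le k . \] Let $\mathcal{H}_A=\mathcal{H}_B=\mathbb{C}^n\otimes\mathbb{C}^k$, let $\widetilde{X}=X\otimes\mathbb{1}_k$, and let $\widetilde{\Lambda}(\cdot)=\Lambda[\operatorname{Tr}_2(\cdot)]$, where $\operatorname{Tr}_2$ is the partial trace over the factor $\mathbb{C}^k$. Then the problem (P) is equivalent to (has the same optimal value as) the conic program \[ (\mathrm{C})\qquad \max_{\Phi_{AB}}\ \operatorname{Tr}\big[(\widetilde{X}_A\otimes\mathbb{1}_B)\Phi_{AB}\big]\quad\text{s.t.}\quad \Phi_{AB}\in\mathrm{SEP},\ \operatorname{Tr}(\Phi_{AB})=1,\ V_{AB}\Phi_{AB}=\Phi_{AB},\ (\widetilde{\Lambda}_A\otimes\mathrm{id}_B)(\Phi_{AB})=Y\otimes\operatorname{Tr}_A(\Phi_{AB}). \]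
   Context: $\mathrm{SEP}$ denotes the cone of (unnormalized) separable operators on $\mathcal{H}_A\otimes\mathcal{H}_B$, i.e. the convex hull of $\{M_A\otimes N_B: M_A\ge0,\ N_B\ge 0\}$ with $M_A,N_B$ complex positive semidefinite operators on $\mathcal{H}_A,\mathcal{H}_B$. $V_{AB}$ is the swap operator on $\mathcal{H}_A\otimes\mathcal{H}_B$, $V_{AB}\ket{\psi_1}\ket{\psi_2}=\ket{\psi_2}\ket{\psi_1}$. A subscript $A$ (resp. $B$) indicates that an operator or map acts on $\mathcal{H}_A$ (resp. $\mathcal{H}_B$); $\mathrm{id}_B$ is the identity map on operators on $\mathcal{H}_B$; $\operatorname{Tr}_A$ is the partial trace over $\mathcal{H}_A$, so both sides of the last constraint are operators on $\mathbb{C}^m\otimes\mathcal{H}_B$. *)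

(* Defs.v *)
From HB Require Import structures.
From mathcomp Require Import all_boot all_order all_algebra.
From mathcomp Require Import all_classical all_reals.
From mathcomp Require Import ereal.
From mathcomp Require Import complex mxtens.
Set Implicit Arguments. Unset Strict Implicit. Unset Printing Implicit Defensive.
Import Order.TTheory GRing.Theory Num.Theory.
Local Open Scope ring_scope.
Local Open Scope complex_scope.

Section QDefs.
Variable R : realType.
Local Notation C := R[i].

Definition ctr (p q : nat) (A : 'M[C]_(p, q)) : 'M[C]_(q, p) :=
  (map_mx Num.conj A)^T.

Definition is_hermitian (p : nat) (A : 'M[C]_p) : Prop := ctr A = A.

Definition psd (p : nat) (A : 'M[C]_p) : Prop :=
  is_hermitian A /\ forall v : 'cV[C]_p, 0 <= (ctr v *m A *m v) 0 0.

(* Index convention of tensmx: the basis vector e_i (x) e_j of C^p (x) C^q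
   is indexed by mxtens_index (i, j) : 'I_(p * q). *)

Definition ptr2 (p q : nat) (M : 'M[C]_(p * q)) : 'M[C]_p :=
  \matrix_(i, j) \sum_(l < q) M (mxtens_index (i, l)) (mxtens_index (j, l)).

Definition ptr1 (p q : nat) (M : 'M[C]_(p * q)) : 'M[C]_q :=
  \matrix_(i, j) \sum_(l < p) M (mxtens_index (l, i)) (mxtens_index (l, j)).

Definition blk (p q : nat) (b b' : 'I_q) (M : 'M[C]_(p * q)) : 'M[C]_p :=
  \matrix_(i, j) M (mxtens_index (i, b)) (mxtens_index (j, b')).

(* (L (x) id)(M) for a map L : M_p -> M_r acting on the first factor *)
Definition map_tens_id (p r q : nat) (L : 'M[C]_p -> 'M[C]_r)
    (M : 'M[C]_(p * q)) : 'M[C]_(r * q) :=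
  \sum_(b < q) \sum_(b' < q) tensmx (L (blk b b' M)) (delta_mx b b').

Definition swap_op (d : nat) : 'M[C]_(d * d) :=
  \sum_(a < d) \sum_(b < d) delta_mx (mxtens_index (b, a)) (mxtens_index (a, b)).

(* cone of (unnormalized) separable operators on C^p (x) C^q:
   convex hull of {M (x) N | M, N >= 0}, i.e. finite sums of such products *)
Definition SEP (p q : nat) (Phi : 'M[C]_(p * q)) : Prop :=
  exists s : seq ('M[C]_p * 'M[C]_q),
    (forall x, x \in s -> psd x.1 /\ psd x.2) /\
    Phi = \sum_(x <- s) tensmx x.1 x.2.

Definition reC (z : C) : R := complex.Re z.

Definition opt_P (n m k : nat) (X : 'M[C]_n) (Lam : 'M[C]_n -> 'M[C]_m)
    (Y : 'M[C]_m) : \bar R :=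
  ereal_sup [set v : \bar R | exists rho : 'M[C]_n,
     [/\ Lam rho = Y, \tr rho = 1, psd rho, (\rank rho <= k)%N
       & v = (reC (\tr (X *m rho)))%:E]].

Definition opt_C (n m k : nat) (X : 'M[C]_n) (Lam : 'M[C]_n -> 'M[C]_m)
    (Y : 'M[C]_m) : \bar R :=
  let Xt : 'M[C]_(n * k) := tensmx X (1%:M : 'M[C]_k) in
  let Lamt : 'M[C]_(n * k) -> 'M[C]_m := fun M => Lam (ptr2 M) in
  ereal_sup [set v : \bar R | exists Phi : 'M[C]_((n * k) * (n * k)),
     [/\ SEP Phi, \tr Phi = 1, swap_op _ *m Phi = Phi,
         map_tens_id Lamt Phi = tensmx Y (ptr1 Phi)
       & v = (reC (\tr (tensmx Xt (1%:M : 'M[C]_(n * k)) *m Phi)))%:E]].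

End QDefs.

(* Main.v *)
Require Import Defs.
From HB Require Import structures.
From mathcomp Require Import all_boot all_order all_algebra.
From mathcomp Require Import all_classical all_reals.
From mathcomp Require Import ereal.
From mathcomp Require Import complex mxtens.
From mathcomp Require Import spectral sesquilinear.
From mathcomp Require Import ring.
Import Order.TTheory GRing.Theory Num.Theory.
Local Open Scope ring_scope.
Local Open Scope sesquilinear_scope.
Set Implicit Arguments. Unset Strict Implicit. Unset Printing Implicit Defensive.

Section Basics.
Variable R : realType.
Local Notation C := R[i].

Lemma sum_tens p q (F : 'I_(p * q) -> C) :
  \sum_(x < p * q) F x = \sum_(i < p) \sum_(j < q) F (mxtens_index (i, j)).
Proof.
rewrite pair_big /=.
rewrite (reindex (@mxtens_index p q)) /=; last first.
  by exists (@mxtens_unindex p q) => x _; [apply: mxtens_indexK | apply: mxtens_unindexK].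
by apply: eq_bigr => -[i j].
Qed.

Lemma ctr_entry p q (A : 'M[C]_(p, q)) i j : ctr A i j = (A j i)^*.
Proof. by rewrite /ctr !mxE. Qed.

Lemma ctr_mul p q r (A : 'M[C]_(p, q)) (B : 'M[C]_(q, r)) :
  ctr (A *m B) = ctr B *m ctr A.
Proof.
apply/matrixP => i j; rewrite !mxE rmorph_sum; apply: eq_bigr => l _.
by rewrite !mxE rmorphM mulrC.
Qed.

Lemma ctrK p q (A : 'M[C]_(p, q)) : ctr (ctr A) = A.
Proof. by apply/matrixP => i j; rewrite !ctr_entry conjCK. Qed.

Lemma ctrD p q (A B : 'M[C]_(p, q)) : ctr (A + B) = ctr A + ctr B.
Proof. by apply/matrixP => i j; rewrite !mxE rmorphD. Qed.

Lemma ctrZ p q c (A : 'M[C]_(p, q)) : ctr (c *: A) = c^* *: ctr A.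
Proof. by apply/matrixP => i j; rewrite !mxE rmorphM. Qed.

Lemma ctr0 p q : ctr (0 : 'M[C]_(p, q)) = 0.
Proof. by apply/matrixP => i j; rewrite !mxE rmorph0. Qed.

Lemma ctr_tens p q r s (A : 'M[C]_(p, q)) (B : 'M[C]_(r, s)) :
  ctr (A *t B) = ctr A *t ctr B.
Proof. by apply/matrixP => i j; rewrite !mxE rmorphM. Qed.

Lemma tr_tens p q (A : 'M[C]_p) (B : 'M[C]_q) : \tr (A *t B) = \tr A * \tr B.
Proof.
rewrite /mxtrace sum_tens big_distrlr /=; apply: eq_bigr => i _.
by apply: eq_bigr => j _; rewrite tensmxE.
Qed.

Lemma tensDl p q r s (A1 A2 : 'M[C]_(p, q)) (B : 'M[C]_(r, s)) :
  (A1 + A2) *t B = A1 *t B + A2 *t B.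
Proof. by apply/matrixP => i j; rewrite !mxE mulrDl. Qed.

Lemma tensDr p q r s (A : 'M[C]_(p, q)) (B1 B2 : 'M[C]_(r, s)) :
  A *t (B1 + B2) = A *t B1 + A *t B2.
Proof. by apply/matrixP => i j; rewrite !mxE mulrDr. Qed.

Lemma tensZl p q r s c (A : 'M[C]_(p, q)) (B : 'M[C]_(r, s)) :
  (c *: A) *t B = c *: (A *t B).
Proof. by apply/matrixP => i j; rewrite !mxE mulrA. Qed.

Lemma tensZr p q r s c (A : 'M[C]_(p, q)) (B : 'M[C]_(r, s)) :
  A *t (c *: B) = c *: (A *t B).
Proof. by apply/matrixP => i j; rewrite !mxE mulrCA. Qed.

Lemma tens_suml p q r s I (rr : seq I) (P : pred I) (F : I -> 'M[C]_(p, q)) (B : 'M[C]_(r, s)) :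
  (\sum_(x <- rr | P x) F x) *t B = \sum_(x <- rr | P x) (F x *t B).
Proof.
elim/big_rec2: _ => [|x y1 y2 _ <-]; first by rewrite tens0mx.
by rewrite tensDl.
Qed.

Lemma tens_sumr p q r s I (rr : seq I) (P : pred I) (A : 'M[C]_(p, q)) (F : I -> 'M[C]_(r, s)) :
  A *t (\sum_(x <- rr | P x) F x) = \sum_(x <- rr | P x) (A *t F x).
Proof.
elim/big_rec2: _ => [|x y1 y2 _ <-]; first by rewrite tensmx0.
by rewrite tensDr.
Qed.

Definition Hv p (v : 'cV[C]_p) : 'M[C]_p := v *m ctr v.

Lemma Hv_entry p (v : 'cV[C]_p) a b : Hv v a b = v a 0 * (v b 0)^*.
Proof. by rewrite /Hv mxE big_ord1 ctr_entry. Qed.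

Lemma ctr_Hv p (v : 'cV[C]_p) : ctr (Hv v) = Hv v.
Proof. by rewrite /Hv ctr_mul ctrK. Qed.

Lemma tr_Hv p (v : 'cV[C]_p) : \tr (Hv v) = \sum_a `|v a 0| ^+ 2.
Proof. by apply: eq_bigr => a _; rewrite Hv_entry normCK. Qed.

Lemma tr_Hv_ge0 p (v : 'cV[C]_p) : 0 <= \tr (Hv v).
Proof. by rewrite tr_Hv sumr_ge0 // => a _; rewrite exprn_ge0. Qed.

Lemma tr_Hv_eq0 p (v : 'cV[C]_p) : \tr (Hv v) = 0 -> v = 0.
Proof.
rewrite tr_Hv => /eqP; rewrite psumr_eq0 => [/allP H|a _]; last by rewrite exprn_ge0.
apply/matrixP => a j; rewrite [j]ord1 mxE.
have /H : a \in index_enum 'I_p by rewrite mem_index_enum.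
by rewrite /= sqrf_eq0 normr_eq0 => /eqP.
Qed.

Definition vt p q (u : 'cV[C]_p) (w : 'cV[C]_q) : 'cV[C]_(p * q) :=
  \col_x (u (mxtens_unindex x).1 0 * w (mxtens_unindex x).2 0).

Lemma vt_entry p q (u : 'cV[C]_p) (w : 'cV[C]_q) a b j :
  vt u w (mxtens_index (a, b)) j = u a 0 * w b 0.
Proof. by rewrite mxE mxtens_indexK. Qed.

Lemma Hv_tens p q (u : 'cV[C]_p) (w : 'cV[C]_q) :
  Hv u *t Hv w = Hv (vt u w).
Proof.
apply/matrixP => x y.
case: (mxtens_indexP x) => a b; case: (mxtens_indexP y) => c d.
rewrite tensmxE !Hv_entry !vt_entry rmorphM.
by rewrite -!mulrA; congr (_ * _); rewrite mulrCA.
Qed.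


Lemma ctr_herm p (A : 'M[C]_p) : ctr A = A -> A \is hermsymmx.
Proof.
move=> hA; rewrite qualifE expr0 scale1r; apply/eqP.
by rewrite -[LHS]hA /ctr map_trmx.
Qed.

Lemma ctrE p q (A : 'M[C]_(p, q)) : ctr A = A ^t*.
Proof. by rewrite /ctr map_trmx. Qed.

Lemma spectral_psd p (A : 'M[C]_p) : psd A ->
  exists (Q : 'M[C]_p) (dd : 'I_p -> C),
    [/\ ctr Q *m Q = 1%:M, ctr Q *m A *m Q = diag_mx (\row_i dd i),
        A = Q *m diag_mx (\row_i dd i) *m ctr Q & forall i, 0 <= dd i].
Proof.
move=> [hA hpos].
have /hermitian_normalmx /orthomx_spectralP := ctr_herm hA.
set P := spectralmx A; set sp := spectral_diag A => eA.
have Pu : P \is unitarymx by exact: spectral_unitarymx.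
have PP : P *m ctr P = 1%:M by rewrite ctrE; apply/unitarymxP.
have ctrP : ctr (ctr P) = P by rewrite ctrK.
have PP' : ctr P *m P = 1%:M.
  by apply: mulmx1C; exact: PP.
rewrite invmx_unitary // -ctrE in eA.
have eD : P *m A *m ctr P = diag_mx sp.
  by rewrite eA !mulmxA PP mul1mx -mulmxA PP mulmx1.
exists (ctr P), (fun i => sp 0 i).
have esp : \row_i sp 0 i = sp by apply/rowP => i; rewrite mxE.
rewrite esp ctrK; split => //.
move=> i; have := hpos (col i (ctr P)).
suff -> : (ctr (col i (ctr P)) *m A *m col i (ctr P)) 0 0 = sp 0 i by [].
have -> : ctr (col i (ctr P)) = row i P.
  by apply/matrixP => a b; rewrite ctr_entry !mxE conjCK.
have : (P *m A *m ctr P) i i = sp 0 i by rewrite eD mxE eqxx mulr1n.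
move=> <-; rewrite !mxE; apply: eq_bigr => j _; rewrite !mxE.
by congr (_ * _); apply: eq_bigr => l _; rewrite !mxE.
Qed.

Lemma psd_fact p k (A : 'M[C]_p) : (0 < p)%N -> psd A -> (\rank A <= k)%N ->
  exists B : 'M[C]_(p, k), A = B *m ctr B.
Proof.
move=> p0 hA rk.
have [Q [dd [QQ eD eA dd0]]] := spectral_psd hA.
pose i0 := Ordinal p0.
pose S := [seq i <- enum 'I_p | dd i != 0].
have Suniq : uniq S by rewrite filter_uniq // enum_uniq.
have Sdd j : (j < size S)%N -> dd (nth i0 S j) != 0.
  move=> js; have : nth i0 S j \in S by rewrite mem_nth.
  by rewrite mem_filter => /andP[].
have sS : (size S <= k)%N.
  apply: leq_trans rk.
  pose F : 'M[C]_(size S, p) := \matrix_(j, i) ((i == nth i0 S j)%:R / dd i).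
  pose G : 'M[C]_(p, size S) := \matrix_(i, j) (i == nth i0 S j)%:R.
  have FG : F *m (ctr Q *m A *m Q) *m G = 1%:M.
    rewrite eD mul_mx_diag; apply/matrixP => j j'.
    rewrite !mxE (bigD1 (nth i0 S j)) //= big1 ?addr0; last first.
      by move=> i /negPf ni; rewrite /F !mxE ni !mul0r.
    rewrite /F /G !mxE eqxx mul1r mulVf ?Sdd // mul1r.
    by rewrite nth_uniq // -val_eqE.
  have := mxrank1 C (size S); rewrite -FG => <-.
  apply: leq_trans (mxrankM_maxl _ _) _.
  apply: leq_trans (mxrankM_maxr _ _) _.
  apply: leq_trans (mxrankM_maxl _ _) _.
  exact: mxrankM_maxr.
pose w i : 'cV[C]_p := sqrtC (dd i) *: col i Q.
have Aw : A = \sum_i Hv (w i).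
  apply/matrixP => a b; rewrite eA summxE mul_mx_diag !mxE.
  apply: eq_bigr => i _; rewrite Hv_entry !mxE rmorphM /= (geC0_conj (x := sqrtC (dd i))) ?sqrtC_ge0 //.
  by rewrite mulrACA -expr2 sqrtCK [RHS]mulrCA mulrA.
pose B : 'M[C]_(p, k) :=
  \matrix_(a, l) (if (l < size S)%N then w (nth i0 S l) a 0 else 0).
exists B; rewrite Aw; apply/matrixP => a b.
rewrite summxE !mxE.
transitivity (\sum_(i <- S) Hv (w i) a b).
  rewrite big_filter [RHS]big_mkcond /= -big_enum /=.
  apply: eq_bigr => i _; case: ifP => // /negPn /eqP di.
  by rewrite Hv_entry /w di sqrtC0 scale0r mxE mul0r.
rewrite (big_nth i0) big_mkord (big_ord_widen _ (fun l => Hv (w (nth i0 S l)) a b) sS) big_mkcond /=.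
apply: eq_bigr => l _; rewrite Hv_entry /B !mxE.
by case: ifP; rewrite ?mul0r.
Qed.

Lemma ptr2_entry p q (M : 'M[C]_(p * q)) i j :
  ptr2 M i j = \sum_(l < q) M (mxtens_index (i, l)) (mxtens_index (j, l)).
Proof. by rewrite mxE. Qed.

Lemma ptr2D p q (A B : 'M[C]_(p * q)) : ptr2 (A + B) = ptr2 A + ptr2 B.
Proof. by apply/matrixP => i j; rewrite !mxE -big_split; apply: eq_bigr => l _; rewrite mxE. Qed.

Lemma ptr2Z p q c (A : 'M[C]_(p * q)) : ptr2 (c *: A) = c *: ptr2 A.
Proof. by apply/matrixP => i j; rewrite !mxE mulr_sumr; apply: eq_bigr => l _; rewrite mxE. Qed.

Lemma ptr20 p q : ptr2 (0 : 'M[C]_(p * q)) = 0.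
Proof. by apply/matrixP => i j; rewrite !mxE big1 // => l _; rewrite mxE. Qed.

Lemma tr_ptr2 p q (M : 'M[C]_(p * q)) : \tr (ptr2 M) = \tr M.
Proof. by rewrite [RHS]/mxtrace sum_tens; apply: eq_bigr => i _; rewrite mxE. Qed.

Lemma ptr1_tens p q (A : 'M[C]_p) (B : 'M[C]_q) : ptr1 (A *t B) = \tr A *: B.
Proof.
apply/matrixP => i j; rewrite !mxE mulr_suml; apply: eq_bigr => l _.
by rewrite tensmxE.
Qed.

Lemma ptr1D p q (A B : 'M[C]_(p * q)) : ptr1 (A + B) = ptr1 A + ptr1 B.
Proof. by apply/matrixP => i j; rewrite !mxE -big_split; apply: eq_bigr => l _; rewrite mxE. Qed.

Lemma ptr10 p q : ptr1 (0 : 'M[C]_(p * q)) = 0.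
Proof. by apply/matrixP => i j; rewrite !mxE big1 // => l _; rewrite mxE. Qed.

Lemma ptr1_sum p q I (r : seq I) (F : I -> 'M[C]_(p * q)) :
  ptr1 (\sum_(x <- r) F x) = \sum_(x <- r) ptr1 (F x).
Proof.
elim/big_rec2: _ => [|x y1 y2 _ <-]; first by rewrite ptr10.
by rewrite ptr1D.
Qed.

Definition unvec p q (u : 'cV[C]_(p * q)) : 'M[C]_(p, q) :=
  \matrix_(i, l) u (mxtens_index (i, l)) 0.

Lemma ptr2_Hv p q (u : 'cV[C]_(p * q)) : ptr2 (Hv u) = unvec u *m ctr (unvec u).
Proof.
apply/matrixP => i j; rewrite ptr2_entry !mxE; apply: eq_bigr => l _.
by rewrite Hv_entry !mxE.
Qed.

Definition vec p q (B : 'M[C]_(p, q)) : 'cV[C]_(p * q) :=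
  \col_x B (mxtens_unindex x).1 (mxtens_unindex x).2.

Lemma unvecK p q (B : 'M[C]_(p, q)) : unvec (vec B) = B.
Proof. by apply/matrixP => i j; rewrite !mxE mxtens_indexK. Qed.

Lemma tr_mul_tens1 p q (X : 'M[C]_p) (M : 'M[C]_(p * q)) :
  \tr ((X *t (1%:M : 'M[C]_q)) *m M) = \tr (X *m ptr2 M).
Proof.
rewrite /mxtrace sum_tens; apply: eq_bigr => a _.
rewrite [RHS]mxE.
under eq_bigr => l _ do rewrite mxE sum_tens.
rewrite exchange_big /=; apply: eq_bigr => a' _.
rewrite ptr2_entry mulr_sumr; apply: eq_bigr => l _.
rewrite (bigD1 l) //= big1 ?addr0; last first.
  by move=> lp /negPf nl; rewrite tensmxE mxE eq_sym nl mulr0 mul0r.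
by rewrite tensmxE mxE eqxx mulr1.
Qed.

Lemma blk_tens p q (A : 'M[C]_p) (B : 'M[C]_q) b b' : blk b b' (A *t B) = B b b' *: A.
Proof. by apply/matrixP => i j; rewrite mxE tensmxE mxE mulrC. Qed.

Lemma blkD p q b b' (A B : 'M[C]_(p * q)) : blk b b' (A + B) = blk b b' A + blk b b' B.
Proof. by apply/matrixP => i j; rewrite !mxE. Qed.

Lemma blk0 p q b b' : blk b b' (0 : 'M[C]_(p * q)) = 0.
Proof. by apply/matrixP => i j; rewrite !mxE. Qed.

Lemma map_tens_idD p r q (L : 'M[C]_p -> 'M[C]_r) (A B : 'M[C]_(p * q)) :
  (forall A B, L (A + B) = L A + L B) ->
  map_tens_id L (A + B) = map_tens_id L A + map_tens_id L B.
Proof.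
move=> LD; rewrite /map_tens_id -big_split; apply: eq_bigr => b _.
rewrite -big_split; apply: eq_bigr => b' _.
by rewrite blkD LD tensDl.
Qed.

Lemma map_tens_id0 p r q (L : 'M[C]_p -> 'M[C]_r) :
  L 0 = 0 -> map_tens_id L (0 : 'M[C]_(p * q)) = 0.
Proof.
move=> L0; rewrite /map_tens_id big1 // => b _; rewrite big1 // => b' _.
by rewrite blk0 L0 tens0mx.
Qed.

Lemma map_tens_id_sum p r q (L : 'M[C]_p -> 'M[C]_r) I (rr : seq I) (F : I -> 'M[C]_(p * q)) :
  (forall A B, L (A + B) = L A + L B) -> L 0 = 0 ->
  map_tens_id L (\sum_(x <- rr) F x) = \sum_(x <- rr) map_tens_id L (F x).
Proof.
move=> LD L0; elim/big_rec2: _ => [|x y1 y2 _ <-]; first by rewrite map_tens_id0.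
by rewrite map_tens_idD.
Qed.

Lemma map_tens_id_tens p r q (L : 'M[C]_p -> 'M[C]_r) (A : 'M[C]_p) (B : 'M[C]_q) :
  (forall c A, L (c *: A) = c *: L A) ->
  map_tens_id L (A *t B) = L A *t B.
Proof.
move=> LZ; rewrite /map_tens_id [in RHS](matrix_sum_delta B) tens_sumr.
apply: eq_bigr => b _; rewrite tens_sumr; apply: eq_bigr => b' _.
by rewrite blk_tens LZ tensZl tensZr.
Qed.

Lemma swap_entry d (a b c e : 'I_d) :
  swap_op R d (mxtens_index (a, b)) (mxtens_index (c, e)) = ((a == e) && (b == c))%:R.
Proof.
rewrite /swap_op summxE; under eq_bigr => a' _ do rewrite summxE.
have E x y : (mxtens_index x == mxtens_index y :> 'I_(d * d)) = (x == y).
  exact: (inj_eq (can_inj (@mxtens_indexK _ _))).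
rewrite (bigD1 b) //= [X in _ + X]big1 ?addr0; last first.
  move=> a' /negPf na; rewrite big1 // => b' _; rewrite mxE.
  by rewrite !E !xpair_eqE [b == a']eq_sym na andbF.
rewrite (bigD1 a) //= big1 ?addr0; last first.
  by move=> b' /negPf nb; rewrite mxE !E !xpair_eqE eq_sym nb.
rewrite mxE !E !xpair_eqE !eqxx /=.
by rewrite [c == b]eq_sym [e == a]eq_sym andbC.
Qed.

Lemma swap_mul d (M : 'M[C]_(d * d)) a b y :
  (swap_op R d *m M) (mxtens_index (a, b)) y = M (mxtens_index (b, a)) y.
Proof.
rewrite mxE sum_tens (bigD1 b) //= [X in _ + X]big1 ?addr0; last first.
  by move=> c /negPf nc; rewrite big1 // => e _; rewrite swap_entry [b == c]eq_sym nc andbF mul0r.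
rewrite (bigD1 a) //= [X in _ + X]big1 ?addr0; last first.
  by move=> e /negPf ne; rewrite swap_entry eq_sym ne mul0r.
by rewrite swap_entry !eqxx mul1r.
Qed.

Lemma tr_swap d (M : 'M[C]_(d * d)) :
  \tr (swap_op R d *m M) = \sum_(a < d) \sum_(b < d) M (mxtens_index (b, a)) (mxtens_index (a, b)).
Proof. by rewrite /mxtrace sum_tens; apply: eq_bigr => a _; apply: eq_bigr => b _; rewrite swap_mul. Qed.

Lemma psd_Hv p (v : 'cV[C]_p) : psd (Hv v).
Proof.
split; first exact: ctr_Hv.
move=> x; have e : ctr v *m x = ctr (ctr x *m v) by rewrite ctr_mul ctrK.
rewrite /Hv !mulmxA -mulmxA e.
rewrite mxE big_ord1 ctr_entry; exact: mul_conjC_ge0.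
Qed.

Lemma psd_gram p q (B : 'M[C]_(p, q)) : psd (B *m ctr B).
Proof.
split; first by rewrite /is_hermitian ctr_mul ctrK.
move=> x; have e : ctr B *m x = ctr (ctr x *m B) by rewrite ctr_mul ctrK.
rewrite !mulmxA -mulmxA e.
rewrite mxE; apply: sumr_ge0 => l _; rewrite ctr_entry; exact: mul_conjC_ge0.
Qed.

Lemma gram_sum p q (B : 'M[C]_(p, q)) : B *m ctr B = \sum_(l < q) Hv (col l B).
Proof.
apply/matrixP => a b; rewrite summxE mxE; apply: eq_bigr => l _.
by rewrite Hv_entry !mxE.
Qed.

Lemma dir1 n m k (hn : (0 < n)%N) (X : 'M[C]_n) (Lam : {linear 'M[C]_n -> 'M[C]_m})
    (Y : 'M[C]_m) (rho : 'M[C]_n) :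
  Lam rho = Y -> \tr rho = 1 -> psd rho -> (\rank rho <= k)%N ->
  exists Phi : 'M[C]_((n * k) * (n * k)),
     [/\ SEP Phi, \tr Phi = 1, swap_op R _ *m Phi = Phi,
         map_tens_id (fun M => Lam (ptr2 M)) Phi = Y *t ptr1 Phi
       & \tr ((X *t (1%:M : 'M[C]_k)) *t (1%:M : 'M[C]_(n * k)) *m Phi) = \tr (X *m rho)].
Proof.
move=> hL htr hpsd hrk.
have [B eB] := psd_fact hn hpsd hrk.
pose H := Hv (vec B).
have eH : ptr2 H = rho by rewrite /H ptr2_Hv unvecK eB.
have trH : \tr H = 1 by rewrite -tr_ptr2 eH.
exists (H *t H); split.
- exists [:: (H, H)]; split; last by rewrite big_seq1.
  by move=> x; rewrite inE => /eqP -> /=; split; apply: psd_Hv.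
- by rewrite tr_tens trH mulr1.
- apply/matrixP => x y; case: (mxtens_indexP x) => a b.
  rewrite swap_mul; case: (mxtens_indexP y) => c e.
  rewrite !tensmxE /H !Hv_entry; ring.
- rewrite map_tens_id_tens; last by move=> c A; rewrite ptr2Z linearZ.
  by rewrite eH hL ptr1_tens trH scale1r.
- by rewrite tensmx_mul tr_tens mul1mx trH mulr1 tr_mul_tens1 eH.
Qed.

Lemma sep_decomp d (Phi : 'M[C]_(d * d)) : (0 < d)%N -> SEP Phi ->
  exists r : seq ('cV[C]_d * 'cV[C]_d), Phi = \sum_(x <- r) Hv x.1 *t Hv x.2.
Proof.
move=> d0 [s [hs ->]]; elim: s hs => [|x s IH] hs.
  by exists [::]; rewrite !big_nil.
have [h1 h2] := hs x (mem_head _ _).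
have [r' er'] : exists r' : seq ('cV[C]_d * 'cV[C]_d),
    \sum_(y <- s) y.1 *t y.2 = \sum_(y <- r') Hv y.1 *t Hv y.2.
  by apply: IH => y hy; apply: hs; rewrite inE hy orbT.
have [B1 e1] := psd_fact d0 h1 (rank_leq_col x.1).
have [B2 e2] := psd_fact d0 h2 (rank_leq_col x.2).
exists ([seq (col a B1, col b B2) | a <- index_enum 'I_d, b <- index_enum 'I_d] ++ r').
rewrite big_cat big_cons er' big_allpairs_dep /=; congr (_ + _).
rewrite e1 e2 !gram_sum tens_suml; apply: eq_bigr => a _.
by rewrite tens_sumr.
Qed.

Lemma lagrange d (u w : 'cV[C]_d) :
  2%:R * (\tr (Hv u *t Hv w) - \tr (swap_op R d *m (Hv u *t Hv w))) =
  \sum_(a < d) \sum_(b < d) `|u a 0 * w b 0 - u b 0 * w a 0| ^+ 2.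
Proof.
pose f (a b : 'I_d) := u a 0 * (u a 0)^* * (w b 0 * (w b 0)^*).
pose g (a b : 'I_d) := u b 0 * (u a 0)^* * (w a 0 * (w b 0)^*).
have e1 : \tr (Hv u *t Hv w) = \sum_a \sum_b f a b.
  rewrite tr_tens /mxtrace big_distrlr /=; apply: eq_bigr => a _.
  by apply: eq_bigr => b _; rewrite !Hv_entry.
have e2 : \tr (swap_op R d *m (Hv u *t Hv w)) = \sum_a \sum_b g a b.
  rewrite tr_swap; apply: eq_bigr => a _; apply: eq_bigr => b _.
  by rewrite tensmxE !Hv_entry.
have e3 : \sum_(a < d) \sum_(b < d) `|u a 0 * w b 0 - u b 0 * w a 0| ^+ 2 =
    \sum_a \sum_b ((f a b + f b a) - (g a b + g b a)).
  apply: eq_bigr => a _; apply: eq_bigr => b _.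
  rewrite normCK rmorphB !rmorphM /f /g; ring.
rewrite e3 e1 e2.
have e4 : \sum_(a < d) \sum_(b < d) ((f a b + f b a) - (g a b + g b a)) =
   (\sum_a \sum_b f a b + \sum_a \sum_b f b a) - (\sum_a \sum_b g a b + \sum_a \sum_b g b a).
  rewrite -!big_split -sumrB /=; apply: eq_bigr => a _.
  by rewrite -!big_split -sumrB.
rewrite e4 [\sum_i \sum_j f j i]exchange_big [\sum_i \sum_j g j i]exchange_big /=.
ring.
Qed.

Lemma tr_sum p I (r : seq I) (F : I -> 'M[C]_p) :
  \tr (\sum_(x <- r) F x) = \sum_(x <- r) \tr (F x).
Proof.
elim/big_rec2: _ => [|x y1 y2 _ <-]; first by rewrite mxtrace0.
by rewrite mxtraceD.
Qed.

Lemma sym_par d (r : seq ('cV[C]_d * 'cV[C]_d)) :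
  let Phi := \sum_(x <- r) Hv x.1 *t Hv x.2 in
  swap_op R d *m Phi = Phi ->
  forall x, x \in r -> forall a b, x.1 a 0 * x.2 b 0 = x.1 b 0 * x.2 a 0.
Proof.
move=> Phi hsw.
have h0 : \sum_(x <- r) \sum_(a < d) \sum_(b < d)
    `|x.1 a 0 * x.2 b 0 - x.1 b 0 * x.2 a 0| ^+ 2 = 0.
  under eq_bigr => x _ do rewrite -lagrange.
  rewrite -mulr_sumr sumrB -!tr_sum -mulmx_sumr -/Phi hsw.
  by rewrite subrr mulr0.
move=> x xr a b; apply/eqP; rewrite -subr_eq0.
have /eqP := h0; rewrite psumr_eq0; last first.
  by move=> y _; apply: sumr_ge0 => a' _; apply: sumr_ge0 => b' _; apply: exprn_ge0.
move=> /allP /(_ x xr) /= /eqP E1.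
have E2 : \sum_(b < d) `|x.1 a 0 * x.2 b 0 - x.1 b 0 * x.2 a 0| ^+ 2 = 0.
  apply: (psumr_eq0P _ E1) => // a' _.
  by apply: sumr_ge0 => b' _; apply: exprn_ge0.
have E3 : `|x.1 a 0 * x.2 b 0 - x.1 b 0 * x.2 a 0| ^+ 2 = 0.
  by apply: (psumr_eq0P _ E2) => // b' _; apply: exprn_ge0.
by move/eqP: E3; rewrite sqrf_eq0 normr_eq0.
Qed.

Lemma Hv_par p (u w : 'cV[C]_p) :
  (forall a b, u a 0 * w b 0 = u b 0 * w a 0) ->
  \tr (Hv u) *: Hv w = \tr (Hv w) *: Hv u.
Proof.
move=> h; apply/matrixP => b c; rewrite [LHS]mxE [RHS]mxE !Hv_entry.
rewrite /mxtrace !mulr_suml; apply: eq_bigr => a _; rewrite !Hv_entry.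
transitivity ((u a 0 * w b 0) * (u a 0 * w c 0)^*); first by rewrite rmorphM /=; ring.
by rewrite h (h a c) rmorphM /=; ring.
Qed.

Lemma ctr_sum p q I (r : seq I) (F : I -> 'M[C]_(p, q)) :
  ctr (\sum_(x <- r) F x) = \sum_(x <- r) ctr (F x).
Proof.
elim/big_rec2: _ => [|x y1 y2 _ <-]; first by rewrite ctr0.
by rewrite ctrD.
Qed.

Lemma tensBl p q r s (A1 A2 : 'M[C]_(p, q)) (B : 'M[C]_(r, s)) :
  (A1 - A2) *t B = A1 *t B - A2 *t B.
Proof. by apply/matrixP => i j; rewrite !mxE mulrBl. Qed.

Lemma Hv0 p : Hv (0 : 'cV[C]_p) = 0.
Proof. by apply/matrixP => a b; rewrite Hv_entry !mxE mul0r. Qed.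

Lemma constr_terms n m k (Lam : {linear 'M[C]_n -> 'M[C]_m}) (Y : 'M[C]_m)
    (r : seq ('cV[C]_(n * k) * 'cV[C]_(n * k))) :
  let Phi := \sum_(x <- r) Hv x.1 *t Hv x.2 in
  swap_op R _ *m Phi = Phi ->
  map_tens_id (fun M => Lam (ptr2 M)) Phi = Y *t ptr1 Phi ->
  forall x, x \in r -> \tr (Hv x.1) != 0 -> \tr (Hv x.2) != 0 ->
  Lam (ptr2 (Hv x.1)) = \tr (Hv x.1) *: Y.
Proof.
move=> Phi hsw hc x xr tu0 tw0.
have par := sym_par hsw.
pose Lt (M : 'M[C]_(n * k)) := Lam (ptr2 M).
have LtD A B : Lt (A + B) = Lt A + Lt B by rewrite /Lt ptr2D linearD.
have LtZ c A : Lt (c *: A) = c *: Lt A by rewrite /Lt ptr2Z linearZ.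
have Lt0 : Lt 0 = 0 by rewrite /Lt ptr20 linear0.
have E : \sum_(y <- r) (Lt (Hv y.1) - \tr (Hv y.1) *: Y) *t Hv y.2 = 0.
  rewrite (eq_bigr (fun y => Lt (Hv y.1) *t Hv y.2 - (\tr (Hv y.1) *: Y) *t Hv y.2));
    last by move=> y _; rewrite tensBl.
  rewrite sumrB; apply/eqP; rewrite subr_eq0; apply/eqP.
  move: hc; rewrite /Phi (map_tens_id_sum _ _ LtD Lt0) ptr1_sum tens_sumr => hc.
  have h1 : \sum_(y <- r) Lt (Hv y.1) *t Hv y.2 =
      \sum_(y <- r) map_tens_id Lt (Hv y.1 *t Hv y.2).
    by apply: eq_bigr => y _; rewrite map_tens_id_tens.
  have h2 : \sum_(y <- r) (\tr (Hv y.1) *: Y) *t Hv y.2 =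
      \sum_(y <- r) Y *t ptr1 (Hv y.1 *t Hv y.2).
    by apply: eq_bigr => y _; rewrite ptr1_tens tensZr tensZl.
  by rewrite h1 h2.
apply/matrixP => j l.
pose Lf (M : 'M[C]_(n * k)) := (Lt M) j l - Y j l * \tr M.
have LfD A B : Lf (A + B) = Lf A + Lf B.
  by rewrite /Lf LtD mxtraceD mxE mulrDr; ring.
have LfZ c A : Lf (c *: A) = c * Lf A.
  by rewrite /Lf LtZ mxtraceZ mxE; ring.
have Lf0 : Lf 0 = 0 by rewrite /Lf Lt0 mxtrace0 mxE mulr0 subr0.
have Lf_sum (c : _ -> C) (F : _ -> 'M[C]_(n * k)) :
    Lf (\sum_(y <- r) c y *: F y) = \sum_(y <- r) c y * Lf (F y).
  elim/big_rec2: _ => [|y y1 y2 _ <-]; first exact: Lf0.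
  by rewrite LfD LfZ.
have E2 : \sum_(y <- r) Lf (Hv y.1) *: Hv y.2 = 0.
  apply/matrixP => c c'; have := congr1 (fun M : 'M[C]_(m * (n * k)) => M (mxtens_index (j, c)) (mxtens_index (l, c'))) E.
  rewrite /= summxE [X in _ = X]mxE => H; rewrite summxE [RHS]mxE -[X in _ = X]H.
  apply: eq_bigr => y _.
  by rewrite tensmxE [LHS]mxE /Lf; congr (_ * _); rewrite !mxE [Y j l * _]mulrC.
have E3 : \sum_(y <- r) (Lf (Hv y.1))^* *: Hv y.2 = 0.
  have := congr1 (@ctr R _ _) E2; rewrite ctr_sum ctr0 => H; rewrite -[X in _ = X]H; apply: eq_bigr => y _.
  by rewrite ctrZ ctr_Hv.
have E4 : \sum_(y <- r) (Lf (Hv y.1))^* * Lf (Hv y.2) = 0 by rewrite -Lf_sum E3 Lf0.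
have key y : y \in r -> \tr (Hv y.1) * Lf (Hv y.2) = \tr (Hv y.2) * Lf (Hv y.1).
  by move=> yr; rewrite -!LfZ (Hv_par (par y yr)).
have pos y : y \in r -> 0 <= (Lf (Hv y.1))^* * Lf (Hv y.2).
  move=> yr; have [tu|tu] := eqVneq (\tr (Hv y.1)) 0.
    by rewrite (tr_Hv_eq0 tu) Hv0 Lf0 rmorph0 mul0r.
  have -> : Lf (Hv y.2) = \tr (Hv y.2) * (\tr (Hv y.1))^-1 * Lf (Hv y.1).
    by apply: (mulfI tu); rewrite key //; field.
  rewrite mulrCA; apply: mulr_ge0.
    by apply: mulr_ge0; rewrite ?invr_ge0 tr_Hv_ge0.
  by rewrite mulrC; apply: mul_conjC_ge0.
move: E4; rewrite big_seq => /eqP; rewrite psumr_eq0; last by move=> y yr; apply: pos.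
move=> /allP /(_ x xr); rewrite xr /= => /eqP hz.
have : \tr (Hv x.1) * ((Lf (Hv x.1))^* * Lf (Hv x.2)) = 0 by rewrite hz mulr0.
rewrite mulrCA key // mulrCA => /eqP; rewrite mulf_eq0 (negPf tw0) /=.
rewrite mulf_eq0 conjC_eq0 orbb /Lf subr_eq0 => /eqP ->.
by rewrite mxE mulrC.
Qed.

Lemma trPhi d (r : seq ('cV[C]_d * 'cV[C]_d)) :
  \tr (\sum_(x <- r) Hv x.1 *t Hv x.2) = \sum_(x <- r) \tr (Hv x.1) * \tr (Hv x.2).
Proof. by rewrite tr_sum; apply: eq_bigr => x _; rewrite tr_tens. Qed.

Lemma valPhi n k (X : 'M[C]_n) (r : seq ('cV[C]_(n * k) * 'cV[C]_(n * k))) :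
  \tr ((X *t (1%:M : 'M[C]_k)) *t (1%:M : 'M[C]_(n * k)) *m \sum_(x <- r) Hv x.1 *t Hv x.2)
  = \sum_(x <- r) \tr (X *m ptr2 (Hv x.1)) * \tr (Hv x.2).
Proof.
rewrite mulmx_sumr tr_sum; apply: eq_bigr => x _.
by rewrite tensmx_mul tr_tens mul1mx tr_mul_tens1.
Qed.

Lemma feasible n m k (Lam : {linear 'M[C]_n -> 'M[C]_m}) (Y : 'M[C]_m) (u : 'cV[C]_(n * k)) :
  \tr (Hv u) != 0 -> Lam (ptr2 (Hv u)) = \tr (Hv u) *: Y ->
  let rho := (\tr (Hv u))^-1 *: ptr2 (Hv u) in
  [/\ Lam rho = Y, \tr rho = 1, psd rho & (\rank rho <= k)%N].
Proof.
move=> tu hL rho.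
have tpos : 0 <= (\tr (Hv u))^-1 by rewrite invr_ge0 tr_Hv_ge0.
pose B := sqrtC ((\tr (Hv u))^-1) *: unvec u.
have eB : rho = B *m ctr B.
  rewrite /rho /B ctrZ -scalemxAl -scalemxAr scalerA ptr2_Hv.
  by rewrite (geC0_conj (x := sqrtC _)) ?sqrtC_ge0 // -expr2 sqrtCK.
split.
- by rewrite /rho linearZ hL /= scalerA mulVf // scale1r.
- by rewrite /rho mxtraceZ tr_ptr2 mulVf.
- by rewrite eB; apply: psd_gram.
- by rewrite eB; apply: leq_trans (mxrankM_maxl _ _) (rank_leq_col _).
Qed.

Lemma reCD (x y : C) : reC (x + y) = reC x + reC y.
Proof. by case: x => a b; case: y => c e. Qed.

Lemma reC0 : reC (0 : C) = 0.
Proof. by []. Qed.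

Lemma reC_sum I (r : seq I) (F : I -> C) : reC (\sum_(x <- r) F x) = \sum_(x <- r) reC (F x).
Proof.
elim/big_rec2: _ => [|x y1 y2 _ <-]; first exact: reC0.
by rewrite reCD.
Qed.

Lemma reC_mul_ge0 (p c : C) : 0 <= p -> reC (p * c) = reC p * reC c.
Proof.
move=> hp; have := ger0_Im hp; case: p hp => a b /= _ ->; case: c => c e /=.
by rewrite mul0r subr0.
Qed.

Lemma reC_ge0 (p : C) : 0 <= p -> 0 <= reC p.
Proof. by rewrite lecE => /andP[_]. Qed.

End Basics.

Theorem theorem1 (R : realType) (n m k : nat)
    (hn : (0 < n)%N) (hm : (0 < m)%N) (hk : (0 < k)%N)
    (X : 'M[R[i]]_n) (hX : is_hermitian X)
    (Lam : {linear 'M[R[i]]_n -> 'M[R[i]]_m}) (Y : 'M[R[i]]_m) :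
  opt_P k X Lam Y = opt_C k X Lam Y.
Proof.
apply/le_anti/andP; split.
  apply: le_ereal_sup => v [rho [h1 h2 h3 h4 ->]].
  have [Phi [s1 s2 s3 s4 s5]] := dir1 hn X h1 h2 h3 h4.
  by exists Phi; split => //; rewrite s5.
apply: ub_ereal_sup => v [Phi [hsep htr hsw hc ->]].
have d0 : (0 < n * k)%N by rewrite muln_gt0 hn hk.
have [r er] := sep_decomp d0 hsep.
rewrite er in htr hsw hc *.
pose tu (x : 'cV[R[i]]_(n * k) * 'cV[R[i]]_(n * k)) := \tr (Hv x.1).
pose tw (x : 'cV[R[i]]_(n * k) * 'cV[R[i]]_(n * k)) := \tr (Hv x.2).
pose p x := tu x * tw x.
pose rho x := (tu x)^-1 *: ptr2 (Hv x.1).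
pose c x := \tr (X *m rho x).
have val : \tr ((X *t (1%:M : 'M[R[i]]_k)) *t (1%:M : 'M[R[i]]_(n * k)) *m
             \sum_(x <- r) Hv x.1 *t Hv x.2) = \sum_(x <- r) p x * c x.
  rewrite valPhi; apply: eq_bigr => x _.
  rewrite /c /rho -scalemxAr mxtraceZ /p.
  have [t0|t0] := eqVneq (tu x) 0.
    by rewrite /tu in t0 *; rewrite (tr_Hv_eq0 t0) Hv0 ptr20 mulmx0 !mxtrace0 !mul0r.
  by rewrite /tu in t0 *; field.
have sum1 : \sum_(x <- r) p x = 1 by rewrite -trPhi.
have pge0 x : 0 <= p x by apply: mulr_ge0; apply: tr_Hv_ge0.
have feas x : x \in r -> p x != 0 ->
    exists rho : 'M[R[i]]_n,
     [/\ Lam rho = Y, \tr rho = 1, psd rho, (\rank rho <= k)%N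
       & (reC (c x))%:E = (reC (\tr (X *m rho)))%:E].
  move=> xr px; move: (px); rewrite mulf_eq0 negb_or => /andP[tu0 tw0].
  have := constr_terms hsw hc xr tu0 tw0 => hL.
  have [f1 f2 f3 f4] := feasible tu0 hL.
  by exists (rho x); split.
have [x0 x0r px0] : exists2 x, x \in r & p x != 0.
  have : \sum_(x <- r) p x != 0 by rewrite sum1 oner_neq0.
  rewrite psumr_neq0; last by move=> x _; apply: pge0.
  case/hasP => x xr /= hx; exists x => //.
  by rewrite lt0r in hx; case/andP: hx.
have hS x : x \in r -> p x != 0 -> ((reC (c x))%:E <= opt_P k X Lam Y)%E.
  move=> xr px; apply: ereal_sup_ubound.
  have [rh [f1 f2 f3 f4 f5]] := feas x xr px.
  by exists rh; split.
case ES: (opt_P k X Lam Y) => [s| |].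
- rewrite lee_fin val reC_sum.
  apply: (@le_trans _ _ (\sum_(x <- r) reC (p x) * s)).
    rewrite big_seq [X in _ <= X]big_seq; apply: ler_sum => x xr.
    rewrite reC_mul_ge0 //; have [p0|p0] := eqVneq (p x) 0.
      by rewrite p0 reC0 !mul0r.
    apply: ler_wpM2l; first exact: reC_ge0.
    by have := hS x xr p0; rewrite ES lee_fin.
  by rewrite -mulr_suml -reC_sum sum1 mul1r.
- by rewrite leey.
- by have := hS x0 x0r px0; rewrite ES leeNy_eq.
Qed.
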